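(* Let $\Gamma$ be a determined pointclass on $C^\omega$. Let $\langle\{a,b\},C,d,O,v,(\prec_a,\prec_b)\rangle$ be a two-player infinite sequential game with $O=\{y,x_1,\dots,x_n\}$ ($n\ge1$, all distinct), in which every outcome is realizable, $v$ is $\Gamma$-measurable, and the preferences are the linear orders $y\prec_a x_1\prec_a\cdots\prec_a x_n$ and $y\prec_b x_n\prec_b\cdots\prec_b x_1$. Then the game has a Pareto-optimal Nash equilibrium.
   Context: $C$ is a non-empty set of choices, $d:C^*\to\{a,b\}$ the chooser after each history, $v:C^\omega\to O$. A strategy of $X$ is a function $s:d^{-1}(\{X\})\to C$; a profile is identified with $\sigma:C^*\to C$, inducing the play $p(\sigma)$ with $p_n=\sigma(p_{<n})$. $\sigma$ is a Nash equilibrium if no player $X$ has a strategy $s$ with $v(p(\sigma))\prec_X v(p(\sigma_{X\mapsto s}))$ ($\sigma_{X\mapsto s}$ agrees with $s$ on $d^{-1}(\{X\})$, with $\sigma$ elsewhere). An outcome is realizable if it equals $v(p)$ for some $p\in C^\omega$. An outcome $o$ is Pareto-optimal if there is no realizable outcome $q$ such that $o\prec_X q$ for some player $X$ and $q\prec_Y o$ for no player $Y$; a Nash equilibrium is Pareto-optimal if its induced outcome is. A pointclass $\Gamma$ is a collection of subsets of $C^\omega$ closed under continuous preimages; it is determined if for every $W\in\Gamma$ and $D\subseteq C^*$ the win-lose game $\langle C,D,W\rangle$ (first player chooses after histories in $D$, second after the others, first player wins iff the play is in $W$) has a winning strategy for one of the players. $v$ is $\Gamma$-measurable if $v^{-1}[Q]\in\Gamma$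 for all $Q\subseteq O$. *)

(* Defs.v *)
From mathcomp Require Import all_boot.
Set Implicit Arguments. Unset Strict Implicit. Unset Printing Implicit Defensive.

Inductive player := pa | pb.

Definition player_eqb (X Y : player) : bool :=
  match X, Y with pa, pa | pb, pb => true | _, _ => false end.

Section Games.
Variable C : Type.

Definition prefix (p : nat -> C) (n : nat) : seq C := mkseq p n.

Fixpoint hist (sigma : seq C -> C) (n : nat) : seq C :=
  match n with
  | 0 => [::]
  | n'.+1 => rcons (hist sigma n') (sigma (hist sigma n'))
  end.

Definition play (sigma : seq C -> C) : nat -> C := fun n => sigma (hist sigma n).

(* A strategy of X (a function on d^{-1}(X)) is represented by any total
   function s : seq C -> C, only its values on d^{-1}(X) matter. *)
Definition deviate (d : seq C -> player) (sigma : seq C -> C) (X : player)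
  (s : seq C -> C) : seq C -> C :=
  fun h => if player_eqb (d h) X then s h else sigma h.

Definition nash_eq (O : Type) (d : seq C -> player) (v : (nat -> C) -> O)
  (prec : player -> O -> O -> Prop) (sigma : seq C -> C) : Prop :=
  ~ exists (X : player) (s : seq C -> C),
      prec X (v (play sigma)) (v (play (deviate d sigma X s))).

Definition realizable (O : Type) (v : (nat -> C) -> O) (o : O) : Prop :=
  exists p : nat -> C, v p = o.

Definition pareto_optimal (O : Type) (v : (nat -> C) -> O)
  (prec : player -> O -> O -> Prop) (o : O) : Prop :=
  ~ exists q : O, realizable v q /\ (exists X, prec X o q) /\
                  (forall Y, ~ prec Y q o).

(* Continuity on C^omega (product of discrete topologies). *)
Definition continuous_seq (f : (nat -> C) -> (nat -> C)) : Prop :=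
  forall (p : nat -> C) (n : nat), exists m : nat, forall q : nat -> C,
    (forall k, k < m -> q k = p k) -> forall k, k < n -> f q k = f p k.

Definition pointclass (Gamma : ((nat -> C) -> Prop) -> Prop) : Prop :=
  forall (W : (nat -> C) -> Prop) (f : (nat -> C) -> (nat -> C)),
    Gamma W -> continuous_seq f -> Gamma (fun p => W (f p)).

Definition consistent_on (D : seq C -> Prop) (s : seq C -> C) (p : nat -> C)
  : Prop := forall n, D (prefix p n) -> p n = s (prefix p n).

(* Win-lose game <C, D, W>: the first player chooses after histories in D,
   the second after the others; the first player wins iff the play is in W. *)
Definition first_wins (D : seq C -> Prop) (W : (nat -> C) -> Prop) : Prop :=
  exists s : seq C -> C, forall p, consistent_on D s p -> W p.

Definition second_wins (D : seq C -> Prop) (W : (nat -> C) -> Prop) : Prop :=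
  exists t : seq C -> C, forall p, consistent_on (fun h => ~ D h) t p -> ~ W p.

Definition determined (Gamma : ((nat -> C) -> Prop) -> Prop) : Prop :=
  forall W, Gamma W -> forall D : seq C -> Prop,
    first_wins D W \/ second_wins D W.

Definition measurable_in (O : Type) (Gamma : ((nat -> C) -> Prop) -> Prop)
  (v : (nat -> C) -> O) : Prop :=
  forall Q : O -> Prop, Gamma (fun p => Q (v p)).

End Games.

(* Main.v *)
Require Import Defs.
From mathcomp Require Import all_boot.
From mathcomp Require Import zify.
From Stdlib Require Import Lia Classical ClassicalEpsilon FunctionalExtensionality.

Set Implicit Arguments. Unset Strict Implicit.

Lemma dec_ex (P : Prop) : exists b : bool, b = true <-> P.
Proof. case: (classic P) => H; [exists true|exists false]; split=> //. Qed.
Definition dec (P : Prop) : bool :=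
  proj1_sig (constructive_indefinite_description _ (dec_ex P)).

Lemma decP P : dec P = true <-> P.
Proof. rewrite /dec; case: constructive_indefinite_description => b //. Qed.

Notation pref := Defs.prefix.
Definition opp (X : player) := match X with pa => pb | pb => pa end.
Lemma opp_neq X : opp X <> X. Proof. by case: X. Qed.
Lemma player_cases X Z : Z = X \/ Z = opp X. Proof. case: X; case: Z; auto. Qed.
Lemma peqb_refl X : player_eqb X X = true. Proof. by case: X. Qed.
Lemma peqb_opp X : player_eqb (opp X) X = false. Proof. by case: X. Qed.
Lemma peqbP X Y : player_eqb X Y = true <-> X = Y. Proof. by case: X; case: Y. Qed.

Section S.
Variable C : Type.
Variable c0 : C.

Lemma prefix_eqP (r p : nat -> C) m :
  pref r m = pref p m <-> forall i, i < m -> r i = p i.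
Proof.
split.
- move=> E i Hi. have := congr1 (fun s => nth c0 s i) E => /=.
  by rewrite /pref /Defs.prefix !nth_mkseq.
- move=> H; apply: (@eq_from_nth _ c0); rewrite /pref /Defs.prefix ?size_mkseq //.
  by move=> i Hi; rewrite !nth_mkseq // H.
Qed.

Lemma size_prefix (r : nat -> C) m : size (pref r m) = m.
Proof. by rewrite /pref /Defs.prefix size_mkseq. Qed.

Lemma nth_prefix (r : nat -> C) m i : i < m -> nth c0 (pref r m) i = r i.
Proof. by move=> H; rewrite /pref /Defs.prefix nth_mkseq. Qed.

Lemma hist_prefix (s : seq C -> C) k : hist s k = pref (play s) k.
Proof.
elim: k => [//|k IH] /=. by rewrite /pref /Defs.prefix mkseqS -/(Defs.prefix _ _) -IH.
Qed.

Lemma play_eq (s : seq C -> C) k : play s k = s (pref (play s) k).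
Proof. by rewrite /play hist_prefix. Qed.

Variable d : seq C -> player.
Variable O : Type.
Variable v : (nat -> C) -> O.

Definition ForceW (Y : player) (h : seq C) (S : O -> Prop) (t : seq C -> C) :=
  forall r : nat -> C, pref r (size h) = h ->
    (forall k, size h <= k -> d (pref r k) = Y -> r k = t (pref r k)) -> S (v r).
Definition Force Y h S := exists t, ForceW Y h S t.

Lemma Force_weaken Y h (S S' : O -> Prop) : Force Y h S -> (forall o, S o -> S' o) -> Force Y h S'.
Proof. move=> [t Ht] HS; exists t => r H1 H2; exact: HS (Ht r H1 H2). Qed.

Lemma ForceW_ext Y h S t (p : nat -> C) m :
  ForceW Y h S t -> pref p (size h) = h ->
  (forall k, size h <= k < m -> d (pref p k) = Y -> p k = t (pref p k)) ->
  size h <= m -> ForceW Y (pref p m) S t.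
Proof.
move=> Ht Hp Hc Hm r; rewrite size_prefix => Hr Hrc.
have Hri := proj1 (prefix_eqP r p m) Hr.
apply: Ht.
- rewrite -{2}Hp; apply/prefix_eqP => i Hi; apply: Hri; lia.
- move=> k Hk Hd. case: (ltnP k m) => Hkm.
  + have E : pref r k = pref p k by apply/prefix_eqP => i Hi; apply: Hri; lia.
    rewrite E in Hd *; rewrite Hri //; apply: Hc => //; lia.
  + exact: Hrc.
Qed.

Lemma Force_ext Y h S (p : nat -> C) m t :
  ForceW Y h S t -> pref p (size h) = h ->
  (forall k, size h <= k < m -> d (pref p k) = Y -> p k = t (pref p k)) ->
  size h <= m -> Force Y (pref p m) S.
Proof. move=> H1 H2 H3 H4; exists t; exact: (ForceW_ext H1 H2 H3 H4). Qed.

Definition shiftf (h : seq C) (q : nat -> C) : nat -> C :=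
  fun k => if k < size h then nth c0 h k else q (k - size h).

Lemma shiftf_cont h : continuous_seq (shiftf h).
Proof.
move=> p n; exists n => q Hq k Hk; rewrite /shiftf; case: ifP => // _.
apply: Hq; lia.
Qed.

Lemma pref_shift (h : seq C) (q : nat -> C) k : pref (shiftf h q) (size h + k) = h ++ pref q k.
Proof.
apply: (@eq_from_nth _ c0); first by rewrite size_cat !size_prefix.
move=> i; rewrite size_prefix => Hi; rewrite nth_prefix // nth_cat /shiftf.
case: ifP => H //; rewrite nth_prefix //; lia.
Qed.

Lemma shift_back (h : seq C) (r : nat -> C) : pref r (size h) = h -> shiftf h (fun k => r (k + size h)) = r.
Proof.
move=> Hr; apply: functional_extensionality => k; rewrite /shiftf.
case: ifP => H.
- by rewrite -{1}Hr nth_prefix.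
- congr r; lia.
Qed.

Lemma pref_back (h : seq C) (r : nat -> C) k : pref r (size h) = h ->
  pref r (size h + k) = h ++ pref (fun k => r (k + size h)) k.
Proof. move=> Hr; by rewrite -{1}(shift_back Hr) pref_shift. Qed.

Variable Gamma : ((nat -> C) -> Prop) -> Prop.
Hypothesis HGamma : pointclass Gamma.
Hypothesis Hdet : determined Gamma.
Hypothesis Hmeas : measurable_in Gamma v.

Lemma det_pa h (S : O -> Prop) : Force pa h S \/ Force pb h (fun o => ~ S o).
Proof.
have HW : Gamma (fun q => S (v (shiftf h q))).
  exact: (HGamma (Hmeas S) (shiftf_cont h)).
case: (Hdet HW (fun g => d (h ++ g) = pa)) => [[s Hs]|[s Hs]].
- left; exists (fun g => s (drop (size h) g)) => r Hr Hc.
  rewrite -(shift_back Hr); apply: Hs => k Hk.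
  have := Hc (size h + k) (leq_addr _ _); rewrite pref_back // addnC.
  by move=> ->; rewrite // drop_size_cat.
- right; exists (fun g => s (drop (size h) g)) => r Hr Hc.
  rewrite -(shift_back Hr); apply: Hs => k Hk.
  have := Hc (size h + k) (leq_addr _ _); rewrite pref_back // addnC.
  move=> -> //; last by move: Hk; case: (d _).
  by rewrite drop_size_cat.
Qed.

Lemma det X h (S : O -> Prop) : Force X h S \/ Force (opp X) h (fun o => ~ S o).
Proof.
case: X; first exact: det_pa.
case: (det_pa h (fun o => ~ S o)) => H; [right|left] => //.
apply: (Force_weaken H) => o; exact: NNPP.
Qed.

End S.
Section NE.
Variable C : Type.
Variable c0 : C.
Variable d : seq C -> player.
Variable O : Type.
Variable v : (nat -> C) -> O.
Variable prec : player -> O -> O -> Prop.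
Hypothesis Hirr : forall X o, ~ prec X o o.
Variable p : nat -> C.
Hypothesis HG : forall j, Force d v (opp (d (pref p j))) (pref p j)
   (fun o => ~ prec (d (pref p j)) (v p) o).

Definition T j := proj1_sig (constructive_indefinite_description _ (HG j)).
Lemma TP j : ForceW d v (opp (d (pref p j))) (pref p j)
   (fun o => ~ prec (d (pref p j)) (v p) o) (T j).
Proof. rewrite /T; by case: constructive_indefinite_description. Qed.

Definition fd (g : seq C) :=
  find id (mkseq (fun i => ~~ dec (nth c0 g i = p i)) (size g)).

Definition sig0 (g : seq C) := if fd g == size g then p (size g) else T (fd g) g.

Lemma fd_agree (r : nat -> C) n : (forall i, i < n -> r i = p i) -> fd (pref r n) = n.
Proof.
move=> H; rewrite /fd size_prefix hasNfind ?size_mkseq //.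
apply/hasPn => b /mapP [i]; rewrite mem_iota => /andP [_ Hi] ->.
rewrite add0n in Hi.
rewrite nth_prefix // H //.
by have /decP -> : p i = p i by [].
Qed.

Lemma fd_dev (r : nat -> C) n j : j < n -> (forall i, i < j -> r i = p i) -> r j <> p j ->
  fd (pref r n) = j.
Proof.
move=> Hjn H Hj; rewrite /fd size_prefix.
set s := mkseq _ n.
have Es : forall i, i < n -> nth false s i = ~~ dec (r i = p i).
  by move=> i Hi; rewrite /s nth_mkseq // nth_prefix.
have Hdj : dec (r j = p j) = false.
  by case E: (dec _) => //; move/decP: E.
have Hk : has id s.
  have Hsz : size s = n by rewrite /s size_mkseq.
  rewrite has_find; case: ltnP => // Hge; rewrite Hsz in Hge.
  have := before_find false (leq_trans Hjn Hge) (s:=s) (a:=id).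
  by rewrite /= Es // Hdj.
have := nth_find false Hk; set k := find id s => Hk1.
case: (ltngtP k j) => // Hkj.
- move: Hk1; rewrite /= Es; last by lia.
  by rewrite H // ; have /decP -> : p k = p k by [].
- have := before_find false Hkj (s:=s) (a:=id).
  by rewrite /= Es // Hdj.
Qed.

Lemma play_sig0 : play sig0 = p.
Proof.
apply: functional_extensionality => k.
elim: k {-2}k (leqnn k) => [|k IH] i Hi.
- have -> : i = 0 by lia.
  by rewrite play_eq /sig0 (@fd_agree _ 0) // size_prefix eqxx.
- rewrite play_eq /sig0 (@fd_agree _ i) ?size_prefix ?eqxx // => m Hm.
  apply: IH; lia.
Qed.

Lemma ne_sig0 : nash_eq d v prec sig0.
Proof.
move=> [X [s Hp]].
set r := play (deviate d sig0 X s) in Hp.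
rewrite play_sig0 in Hp.
case: (classic (forall k, r k = p k)) => Hall.
  have E : r = p by apply: functional_extensionality.
  by move: Hp; rewrite E; apply: Hirr.
have Hex : exists k, ~~ dec (r k = p k).
  apply: NNPP => Hn; apply: Hall => k; apply: NNPP => Hk; apply: Hn; exists k.
  by case E: (dec _) => //; move/decP: E.
case: (ex_minnP Hex) => j Hj Hmin.
have Hrj : r j <> p j by move=> E; move: Hj; have /decP -> : r j = p j by [].
have Hlt : forall i, i < j -> r i = p i.
  move=> i Hi; apply: NNPP => Hne.
  have : ~~ dec (r i = p i) by case E: (dec _) => //; move/decP: E.
  by move/Hmin; lia.
have Hpj : pref r j = pref p j by apply/prefix_eqP.
have Hrd : forall k, r k = deviate d sig0 X s (pref r k) by move=> k; rewrite /r play_eq.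
have HdX : d (pref p j) = X.
  apply/peqbP; apply: negbNE; apply/negP => Hne.
  apply: Hrj; rewrite Hrd /deviate Hpj (negbTE Hne) /sig0.
  rewrite (@fd_agree _ j) ?size_prefix ?eqxx //.
apply: (TP (j:=j) (r:=r)); first by rewrite size_prefix.
- move=> k; rewrite size_prefix => Hk; rewrite HdX => Hd.
  have Hjk : j < k.
    rewrite leq_eqVlt in Hk; case/orP: Hk => // /eqP E.
    by move: Hd; rewrite -E Hpj HdX => /esym /opp_neq.
  rewrite Hrd /deviate Hd peqb_opp /sig0.
  by rewrite (@fd_dev _ k j) ?size_prefix // (ltn_eqF Hjk).
- by rewrite HdX.
Qed.

End NE.
Section Case1.
Variable C : Type.
Variable c0 : C.
Variable d : seq C -> player.
Variable O : Type.
Variable v : (nat -> C) -> O.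
Variable Gamma : ((nat -> C) -> Prop) -> Prop.
Hypothesis HGamma : pointclass Gamma.
Hypothesis Hdet : determined Gamma.
Hypothesis Hmeas : measurable_in Gamma v.
Variable prec : player -> O -> O -> Prop.
Variable n : nat.
Variable y : O.
Variable x : 'I_n -> O.
Hypothesis Hxinj : injective x.
Hypothesis Hxy : forall i, x i <> y.
Hypothesis HO : forall o : O, o = y \/ exists i, o = x i.
Variable X : player.
Hypothesis Hn : 0 < n.
Variable rho : 'I_n -> nat.
Hypothesis Hrho : forall j, rho j < n.
Hypothesis HX : forall o o', prec X o o' -> o = y \/
   exists i j, o = x i /\ o' = x j /\ rho i < rho j.
Hypothesis HY : forall o o', prec (opp X) o o' -> o = y \/
   exists i j, o = x i /\ o' = x j /\ rho j < rho i.

Definition A k := fun o => exists j, k <= rho j /\ o = x j.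

Lemma oppK Z : opp (opp Z) = Z. Proof. by case: Z. Qed.

Lemma case1 h : Force d v X h (fun o => o <> y) ->
  exists p, pref p (size h) = h /\ v p <> y /\
   forall j, size h <= j -> Force d v (opp (d (pref p j))) (pref p j)
      (fun o => ~ prec (d (pref p j)) (v p) o).
Proof.
move=> HF.
have Hex : exists k, dec (k < n /\ Force d v X h (A k)).
  exists 0; apply/decP; split; first by [].
  apply: (Force_weaken HF) => o Ho; case: (HO o) => [//|[i ->]]; by exists i.
have Hb : forall k, dec (k < n /\ Force d v X h (A k)) -> k <= n.
  by move=> k /decP [Hk _]; apply: ltnW.
case: (ex_maxnP Hex Hb) => K /decP [HK [s Hs]] Hmax.
have [t Ht] : Force d v (opp X) h (fun o => ~ A K.+1 o).
  case: (ltnP K.+1 n) => Hn'.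
  - case: (det c0 d HGamma Hdet Hmeas X h (A K.+1)) => // HF'.
    have : K.+1 <= K by apply: Hmax; apply/decP; split.
    by rewrite ltnn.
  - exists (fun _ => c0) => r _ _ [j [Hj _]]; have := Hrho j; lia.
pose sg := fun g : seq C => if size g < size h then nth c0 h (size g)
   else if player_eqb (d g) X then s g else t g.
pose p := play sg.
have Hp : forall k, p k = sg (pref p k) by move=> k; exact: play_eq.
have Hph : pref p (size h) = h.
  apply: (@eq_from_nth _ c0); rewrite ?size_prefix // => i Hi.
  by rewrite nth_prefix // Hp /sg size_prefix Hi.
have HcX : forall k, size h <= k -> d (pref p k) = X -> p k = s (pref p k).
  by move=> k Hk Hd; rewrite Hp /sg size_prefix ltnNge Hk /= Hd peqb_refl.
have HcY : forall k, size h <= k -> d (pref p k) = opp X -> p k = t (pref p k).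
  by move=> k Hk Hd; rewrite Hp /sg size_prefix ltnNge Hk /= Hd peqb_opp.
have HA := Hs p Hph HcX.
have HnA := Ht p Hph HcY.
case: HA => j [Hj Ej].
have HjK : rho j = K.
  apply/eqP; rewrite eqn_leq Hj andbT leqNgt; apply/negP => H.
  by apply: HnA; exists j.
exists p; split => //; split; first by rewrite Ej; exact: Hxy.
move=> j' Hj'; case: (player_cases X (d (pref p j'))) => ->.
- apply: (Force_weaken (S := fun o => ~ A K.+1 o)).
    by apply: (Force_ext c0 Ht Hph) => // k /andP [Hk _]; exact: HcY.
  move=> o HnAo Hpr; case: (HX Hpr) => [E|[i [j2 [E1 [E2 Hlt]]]]].
    by rewrite Ej in E; exact: Hxy E.
  rewrite Ej in E1; have Eij := Hxinj E1; subst i.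
  by apply: HnAo; exists j2; split => //; lia.
- rewrite oppK; apply: (Force_weaken (S := A K)).
    by apply: (Force_ext c0 Hs Hph) => // k /andP [Hk _]; exact: HcX.
  move=> o [j3 [Hj3 ->]] Hpr; case: (HY Hpr) => [E|[i [j2 [E1 [E2 Hlt]]]]].
    by rewrite Ej in E; exact: Hxy E.
  rewrite Ej in E1; have Eij := Hxinj E1; subst i.
  have Ej2 := Hxinj E2; subst j3; lia.
Qed.
End Case1.

Theorem lemma30
  (C : Type) (c0 : C)
  (Gamma : ((nat -> C) -> Prop) -> Prop)
  (HGamma : pointclass Gamma) (Hdet : determined Gamma)
  (d : seq C -> player)
  (n : nat) (Hn : 1 <= n)
  (O : Type) (y : O) (x : 'I_n -> O)
  (Hxinj : injective x) (Hxy : forall i, x i <> y)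
  (HO : forall o : O, o = y \/ exists i, o = x i)
  (v : (nat -> C) -> O)
  (Hreal : forall o : O, realizable v o)
  (Hmeas : measurable_in Gamma v)
  (prec : player -> O -> O -> Prop)
  (Hprec_a : forall o o' : O, prec pa o o' <->
      (o = y /\ exists j, o' = x j) \/
      (exists i j, o = x i /\ o' = x j /\ (i < j)%N))
  (Hprec_b : forall o o' : O, prec pb o o' <->
      (o = y /\ exists j, o' = x j) \/
      (exists i j, o = x i /\ o' = x j /\ (j < i)%N)) :
  exists sigma : seq C -> C,
    nash_eq d v prec sigma /\ pareto_optimal v prec (v (play sigma)).
Proof.
have Hirr : forall X o, ~ prec X o o.
  move=> X o H.
  have [[E1 [j E2]]|[i [j [E1 [E2 Hl]]]]] :
     (o = y /\ exists j, o = x j) \/ (exists i j, o = x i /\ o = x j /\ i != j).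
    case: X H => [/Hprec_a|/Hprec_b] [[E1 E2]|[i [j [E1 [E2 Hl]]]]].
    - by left.
    - by right; exists i, j; rewrite neq_ltn Hl.
    - by left.
    - by right; exists i, j; rewrite neq_ltn Hl orbT.
  - by apply: (Hxy j); rewrite -E2.
  - by rewrite E1 in E2; have Eij := Hxinj _ _ E2; subst i; rewrite eqxx in Hl.
have Hy : forall X o, ~ prec X o y.
  move=> X o H.
  have [j Ej] : exists j, y = x j.
    case: X H => [/Hprec_a|/Hprec_b] [[E1 [j E2]]|[i [j [E1 [E2 Hl]]]]]; by exists j.
  by apply: (Hxy j).
have Hpar : forall p, v p <> y -> pareto_optimal v prec (v p).
  move=> p Hp [q [_ [[X HX] HnY]]].
  case: (HO (v p)) => [//|[i Ei]]; rewrite Ei in HX HnY.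
  case: X HX => [/Hprec_a|/Hprec_b] [[E _]|[i1 [j [E1 [E2 Hl]]]]];
    try (by apply: (Hxy i));
    have Eii := Hxinj _ _ E1; subst i1.
  - apply: (HnY pb); apply/Hprec_b; right; exists j, i; by [].
  - apply: (HnY pa); apply/Hprec_a; right; exists j, i; by [].
suff [p [Hpy HG]] : exists p, v p <> y /\ forall j, Force d v (opp (d (pref p j))) (pref p j)
      (fun o => ~ prec (d (pref p j)) (v p) o).
  exists (sig0 c0 HG); split; first exact: ne_sig0.
  rewrite play_sig0; exact: Hpar.
pose i0 := Ordinal Hn.
have [q Hq] := Hreal (x i0).
pose Fn m := Force d v pa (pref q m) (fun o => o <> y) \/ Force d v pb (pref q m) (fun o => o <> y).
have Hsafe : forall j, ~ Fn j ->
   Force d v (opp (d (pref q j))) (pref q j) (fun o => o = y).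
  move=> j Hj.
  case: (det c0 d HGamma Hdet Hmeas (d (pref q j)) (pref q j) (fun o => o <> y)) => H.
    by exfalso; apply: Hj; move: H; case: (d _) => H; [left|right].
  by apply: (Force_weaken H) => o; apply: NNPP.
case: (classic (exists m, Fn m)) => [Hex|Hnex]; last first.
  exists q; split; first by rewrite Hq.
  move=> j; apply: (Force_weaken (Hsafe j _)); last by move=> o ->; apply: Hy.
  by move=> Hj; apply: Hnex; exists j.
have Hex' : exists m, dec (Fn m) by case: Hex => m Hm; exists m; apply/decP.
case: (ex_minnP Hex') => m /decP Fm Hmin.
have [p [Hpq [Hpy Hg]]] : exists p, pref p (size (pref q m)) = pref q m /\ v p <> y /\
   forall j, size (pref q m) <= j -> Force d v (opp (d (pref p j))) (pref p j)
      (fun o => ~ prec (d (pref p j)) (v p) o).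
  case: Fm => HF.
  - apply: (case1 c0 HGamma Hdet Hmeas Hxinj Hxy HO (X:=pa) Hn (rho := fun i => nat_of_ord i)) HF.
    + by move=> j; apply: ltn_ord.
    + move=> o o' /Hprec_a [[E _]|[i [j H]]]; [by left|by right; exists i, j].
    + move=> o o' /Hprec_b [[E _]|[i [j H]]]; [by left|by right; exists i, j].
  - apply: (case1 c0 HGamma Hdet Hmeas Hxinj Hxy HO (X:=pb) Hn (rho := fun i => n - (nat_of_ord i).+1)) HF.
    + by move=> j; have := ltn_ord j; lia.
    + move=> o o' /Hprec_b [[E _]|[i [j [H1 [H2 H3]]]]]; [by left|right; exists i, j].
      by split => //; split => //; have := ltn_ord i; have := ltn_ord j; lia.
    + move=> o o' /Hprec_a [[E _]|[i [j [H1 [H2 H3]]]]]; [by left|right; exists i, j].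
      by split => //; split => //; have := ltn_ord i; have := ltn_ord j; lia.
rewrite size_prefix in Hpq Hg.
exists p; split => // j.
case: (ltnP j m) => Hjm; last exact: Hg.
have E : pref p j = pref q j.
  apply/(prefix_eqP c0) => i Hi; exact: (proj1 (prefix_eqP c0 p q m) Hpq i (ltn_trans Hi Hjm)).
rewrite E; apply: (Force_weaken (Hsafe j _)); first last.
  by move=> o ->; apply: Hy.
move=> Hj; have : m <= j by apply: Hmin; apply/decP.
by rewrite leqNgt Hjm.
Qed.
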